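(* Let $D_x$ be a distribution over features $\mathcal{X}$, let $\alpha>0$, and let $k\ge1$ be odd. Let the label distribution be $D^\alpha_y=1-2\,\mathrm{Bernoulli}(\alpha)$ (so $y=-1$ with probability $\alpha$ and $y=1$ otherwise), and let $D=D_x\otimes D^\alpha_y$ be the joint distribution with independent features and labels. Let $h:\mathcal{X}\to\{-1,1\}$ be the $k$-nearest-neighbors classifier trained on $S\sim D^n$ with $n\ge k$, and let $x\in\mathcal{X}$. Then $$\mathbb{E}_{S\sim D^n}[h(x)]=-1+2\phi_k(\alpha),\qquad \phi_k(\alpha)=\Pr\left(\mathrm{Binomial}(k,\alpha)\le\lfloor k/2\rfloor\right).$$
   Context: The $k$-nearest-neighbors classifier (with $k$ odd) trained on $S=\{(x_i,y_i)\}_{i=1}^n$ returns, for a query $x$, the majority label among the $k$ training points whose features are nearest to $x$ (with respect to a metric on $\mathcal{X}$; the set of neighbors depends on the training features only). *)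

(* Defs.v *)
From HB Require Import structures.
From mathcomp Require Import all_boot all_order all_algebra.
From mathcomp Require Import all_classical all_reals all_analysis.
Set Implicit Arguments. Unset Strict Implicit. Unset Printing Implicit Defensive.
Import Order.TTheory GRing.Theory Num.Theory.
Local Open Scope classical_set_scope.
Local Open Scope ring_scope.

Definition is_metric (R : realType) (X : Type) (dist : X -> X -> R) : Prop :=
  [/\ forall x y, 0 <= dist x y,
      forall x y, dist x y = 0 <-> x = y,
      forall x y, dist x y = dist y x
    & forall x y z, dist x z <= dist x y + dist y z].

(* The k nearest neighbours of the query x among training features xs
   (ties in distance broken by the smaller index): index i is a neighbour iff
   fewer than k indices j precede it in the order (dist x (xs j), j). *)
Definition knn_neighbors (R : realType) (X : Type) (n k : nat)
    (dist : X -> X -> R) (x : X) (xs : 'I_n -> X) : {set 'I_n} :=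
  [set i | (#|[set j | ((dist x (xs j) < dist x (xs i))%R
                      || ((dist x (xs j) == dist x (xs i)) && (j < i)%N))]| < k)%N].

Definition knn (R : realType) (X : Type) (n k : nat)
    (dist : X -> X -> R) (S : 'I_n -> X * R) (x : X) : R :=
  if 0 < \sum_(i in knn_neighbors k dist x (fun j => (S j).1)) (S i).2
  then 1 else -1.

Definition label_dist (R : realType) (alpha : R) : set R -> \bar R :=
  pushforward (bernoulli_prob alpha) (fun b : bool => 1 - 2 * (b%:R : R)).

Definition phi (R : realType) (k : nat) (alpha : R) : R :=
  \sum_(j < (k./2).+1) ('C(k, j))%:R * alpha ^+ j * (1 - alpha) ^+ (k - j).

Definition mutually_independent d d' (Omega : measurableType d)
    (T : measurableType d') (R : realType) (P : probability Omega R) (n : nat)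
    (Z : 'I_n -> Omega -> T) : Prop :=
  forall (A : 'I_n -> set T), (forall i, measurable (A i)) ->
  forall J : {set 'I_n},
    P (\bigcap_(i in [set` J]) (Z i @^-1` A i)) =
    (\prod_(i in J) P (Z i @^-1` A i))%E.

(* Main.v *)
Require Import Defs.
From HB Require Import structures.
From mathcomp Require Import all_boot all_order all_algebra.
From mathcomp Require Import all_classical all_reals all_analysis.
From mathcomp Require Import measurable_realfun lra zify.
Set Implicit Arguments. Unset Strict Implicit. Unset Printing Implicit Defensive.
Import Order.TTheory GRing.Theory Num.Theory.
Local Open Scope ring_scope.

Section Comb.
Variables (R : realType) (n k : nat).
Definition prec (dv : 'I_n -> R) (a b : 'I_n) : bool :=
  (dv a < dv b) || ((dv a == dv b) && (a < b)%N).
Definition nb (dv : 'I_n -> R) : {set 'I_n} :=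
  [set i | (#|[set j | prec dv j i]| < k)%N].

Variable dv : 'I_n -> R.

Lemma prec_irr a : ~~ prec dv a a.
Proof. by rewrite /prec ltxx eqxx ltnn. Qed.

Lemma prec_trans a b c : prec dv a b -> prec dv b c -> prec dv a c.
Proof.
rewrite /prec => /orP[ab|/andP[/eqP ab lab]] /orP[bc|/andP[/eqP bc lbc]].
- by rewrite (lt_trans ab bc).
- by rewrite -bc ab.
- by rewrite ab bc.
- by rewrite ab bc eqxx (ltn_trans lab lbc) orbT.
Qed.

Lemma prec_total a b : a != b -> prec dv a b || prec dv b a.
Proof.
move=> ab; rewrite /prec; case: (ltgtP (dv a) (dv b)) => //= _.
by rewrite -neq_ltn.
Qed.

Definition rank i := #|[set j | prec dv j i]|.

Lemma rank_lt i : (rank i < n)%N.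
Proof.
rewrite /rank; apply: (@leq_trans #|[set: 'I_n]|); last by rewrite cardsT card_ord.
apply: proper_card.
rewrite properE; apply/andP; split; first exact: finset.subsetT.
apply/fintype.subsetPn; exists i => //.
by rewrite inE prec_irr.
Qed.

Lemma rank_lt_prec a b : prec dv a b -> (rank a < rank b)%N.
Proof.
move=> ab; apply: proper_card; rewrite properE; apply/andP; split.
  by apply/fintype.subsetP => j; rewrite !inE => ja; apply: prec_trans ja ab.
by apply/fintype.subsetPn; exists a; rewrite !inE ?prec_irr.
Qed.

Lemma rank_inj : injective rank.
Proof.
move=> a b eab; apply/eqP; apply/negPn/negP => /prec_total /orP[]
  /rank_lt_prec; by rewrite eab ltnn.
Qed.

Lemma card_nb : (k <= n)%N -> #|nb dv| = k.
Proof.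
move=> kn.
pose r i : 'I_n := Ordinal (rank_lt i).
have rinj : injective r by move=> a b /(congr1 val) /rank_inj.
have -> : nb dv = r @^-1: [set m : 'I_n | (m < k)%N].
  by apply/setP => i; rewrite !inE.
rewrite card_preimset //.
have -> : [set m : 'I_n | (m < k)%N] = widen_ord kn @: [set: 'I_k].
  apply/setP => m; rewrite inE; apply/idP/imsetP => [mk|[j _ ->]] //=.
  exists (Ordinal mk); first by rewrite finset.in_setT.
  by apply: ord_inj.
rewrite finset.card_imset; first by rewrite finset.cardsT card_ord.
move=> a b /(congr1 val) => /= h. by apply: ord_inj.
Qed.
End Comb.

Lemma wsum (R : comPzRingType) (n k m : nat) (N : {set 'I_n}) (a b : R) :
  #|N| = k -> (m <= k)%N ->
  \sum_(T : {set 'I_n} | (T \subset N) && (#|T| <= m)%N) a ^+ #|T| * b ^+ (k - #|T|)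
  = \sum_(j < m.+1) ('C(k, j))%:R * a ^+ j * b ^+ (k - j).
Proof.
move=> cN mk.
rewrite (partition_big (fun T : {set 'I_n} => (inord #|T| : 'I_m.+1)) xpredT) //=.
apply: eq_bigr => j _.
rewrite (eq_bigl (fun T : {set 'I_n} => T \in [set T : {set 'I_n} | (T \subset N) & #|T| == j])); last first.
  move=> T; rewrite inE; apply/idP/idP.
    move=> /andP[/andP[TN Tm] /eqP <-]; rewrite TN /= inordK //.
  move=> /andP[TN /eqP Tj]; rewrite TN Tj /= -ltnS ltn_ord /=.
  by apply/eqP/ord_inj; rewrite inordK // ltn_ord.
rewrite (eq_bigr (fun=> a ^+ j * b ^+ (k - j))); last first.
  by move=> T; rewrite inE => /andP[_ /eqP ->].
by rewrite sumr_const cards_draws cN -mulrA mulr_natl.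
Qed.

Lemma binsum1 (R : comPzRingType) (k : nat) (a : R) :
  \sum_(j < k.+1) ('C(k, j))%:R * a ^+ j * (1 - a) ^+ (k - j) = 1.
Proof.
transitivity ((1 - a + a) ^+ k); last by rewrite subrK expr1n.
rewrite exprDn; apply: eq_bigr => j _.
by rewrite -[in RHS]mulr_natl -mulrA [a ^+ j * _]mulrC.
Qed.

Lemma prod_if (R : comPzRingType) (n : nat) (N T : {set 'I_n}) (a b : R) :
  T \subset N ->
  \prod_(i < n) (if i \in N then (if i \in T then a else b) else 1)
  = a ^+ #|T| * b ^+ (#|N| - #|T|).
Proof.
move=> TN; rewrite -big_mkcond /= (bigID (fun i => i \in T)) /=.
rewrite (eq_bigr (fun=> a)); last by move=> i /andP[_ ->].
rewrite [X in _ * X](eq_bigr (fun=> b)); last by move=> i /andP[_ iT]; rewrite (negbTE iT).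
rewrite !prodr_const; congr (_ ^+ _ * _ ^+ _).
  apply: eq_card => i; rewrite unfold_in /=.
  by apply/andP/idP => [[]//|iT]; split => //; apply: (fintype.subsetP TN).
rewrite -(cardsID T N) (finset.setIidPr TN) addKn.
by apply: eq_card => i; rewrite unfold_in /= !inE andbC.
Qed.

Local Open Scope classical_set_scope.
Section Meas.
Variables (R : realType) (d : measure_display) (T : measurableType d).

Lemma measurable_bool_ffun (I : finType) (b : I -> T -> bool)
    (Phi : {ffun I -> bool} -> bool) :
  (forall i, measurable_fun setT (b i)) ->
  measurable [set w | Phi [ffun i => b i w]].
Proof.
move=> mb.
have -> : [set w | Phi [ffun i => b i w]] =
    \bigcup_(v in [set v | Phi v]) \bigcap_(i in [set: I]) (b i @^-1` [set v i]).
  apply/seteqP; split => w /=.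
    move=> Pw; exists [ffun i => b i w] => // i _ /=; by rewrite ffunE.
  move=> [v Pv /= H]; suff -> : [ffun i => b i w] = v by [].
  by apply/ffunP => i; rewrite ffunE; apply: H.
apply: fin_bigcup_measurable; first exact: finite_finset.
move=> v _; apply: fin_bigcap_measurable; first exact: finite_finset.
move=> i _; rewrite -(setTI (b i @^-1` _)); exact: mb.
Qed.

Variables (n k : nat) (D : 'I_n -> T -> R).
Hypothesis mD : forall i, measurable_fun setT (D i).

Lemma measurable_nb (N : {set 'I_n}) :
  measurable [set w | nb k (fun j => D j w) = N].
Proof.
pose Phi (v : {ffun 'I_n * 'I_n -> bool}) :=
  ([set i | (#|[set j | v (j, i)]| < k)%N] == N)%SET.
have -> : [set w | nb k (fun j => D j w) = N] =
   [set w | Phi [ffun p : 'I_n * 'I_n => prec (fun j => D j w) p.1 p.2]].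
  apply/seteqP; split => w /=.
    rewrite /Phi => <-; rewrite /nb; apply/eqP/setP => i; rewrite !inE.
    by congr (_ < _)%N; apply: eq_card => j; rewrite !inE ffunE.
  rewrite /Phi => /eqP <-; rewrite /nb; apply/setP => i; rewrite !inE.
  by congr (_ < _)%N; apply: eq_card => j; rewrite !inE ffunE.
apply: measurable_bool_ffun => -[a b] /=; rewrite /prec.
apply: measurable_or; first exact: measurable_fun_ltr.
by apply: measurable_and; [exact: measurable_fun_eqr|exact: measurable_cst].
Qed.
End Meas.

Section Indep.
Variables (R : realType) (dX : measure_display) (X : measurableType dX)
  (Dx : probability X R) (alpha : R) (n : nat)
  (dO : measure_display) (Omega : measurableType dO) (P : probability Omega R)
  (S : 'I_n -> Omega -> X * R).
Hypotheses (a0 : 0 <= alpha) (a1 : alpha <= 1).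
Hypotheses (mS : forall i, measurable_fun setT (S i))
  (law : forall i A, measurable A -> P (S i @^-1` A) = (Dx \x label_dist alpha)%E A)
  (ind : mutually_independent P S).

Definition dyv (B : set R) : R :=
  alpha * ((-1) \in B)%:R + (1 - alpha) * (1 \in B)%:R.

Lemma DyE B : label_dist alpha B = (dyv B)%:E.
Proof.
rewrite /label_dist /pushforward bernoulli_probE ?a0 ?a1 // !diracE /dyv.
rewrite -!EFinM -EFinD; congr (_%:E); congr (_ * (_ : bool)%:R + _ * (_ : bool)%:R).
  have f1 : (1 - 2 * (true%:R) : R) = -1 by rewrite /= mulr1; lra.
  by apply/idP/idP => /set_mem h; apply/mem_set; move: h => /=; rewrite f1.
have f0 : (1 - 2 * (false%:R) : R) = 1 by rewrite /= mulr0 subr0.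
by apply/idP/idP => /set_mem h; apply/mem_set; move: h => /=; rewrite f0.
Qed.

Lemma dyv_ge0 B : 0 <= dyv B.
Proof.
by rewrite /dyv addr_ge0 // mulr_ge0 // ?subr_ge0 // ler0n.
Qed.

Lemma dyv0 : dyv set0 = 0.
Proof. by rewrite /dyv !in_set0 !mulr0 addr0. Qed.

Lemma dyvT : dyv setT = 1.
Proof. by rewrite /dyv !in_setT !mulr1 addrC subrK. Qed.

Lemma prodE A B : measurable A ->
  (Dx \x label_dist alpha)%E (A `*` B) = (Dx A * (dyv B)%:E)%E.
Proof.
move=> mA; rewrite /product_measure1 /=.
transitivity (\int[Dx]_x ((dyv B) * \1_((fun=> A) (dyv B)) x)%:E)%E.
  apply: eq_integral => x _ /=; rewrite DyE indicE.
  have [xA|xA] := boolP (x \in A).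
    by rewrite in_xsectionX // mulr1.
  by rewrite notin_xsectionX // mulr0 dyv0.
rewrite integralZl_indic //; last by move=> /=; rewrite ltNge dyv_ge0.
by rewrite integral_indic // setIT muleC.
Qed.

Lemma finP (A : set Omega) : measurable A -> P A = (fine (P A))%:E.
Proof. by move=> mA; rewrite fineK // fin_num_measure. Qed.

Lemma finDx (A : set X) : measurable A -> Dx A = (fine (Dx A))%:E.
Proof. by move=> mA; rewrite fineK // fin_num_measure. Qed.

Lemma rectE (B : 'I_n -> set X) (E : 'I_n -> set R) :
  (forall i, measurable (B i)) -> (forall i, measurable (E i)) ->
  P (\bigcap_(i in [set: 'I_n]) S i @^-1` (B i `*` E i)) =
  (\prod_(i < n) (fine (Dx (B i)) * dyv (E i)))%:E.
Proof.
move=> mB mE.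
have := ind (fun i => measurableX (mB i) (mE i)) [set: 'I_n]%SET.
have -> : [set` [set: 'I_n]%SET] = [set: 'I_n].
  by apply/seteqP; split => // i _; rewrite /= finset.in_setT.
move=> ->; rewrite -prodEFin; apply: eq_big => // i.
  by rewrite finset.in_setT.
move=> _; rewrite law; last exact: measurableX.
by rewrite prodE // EFinM -finDx.
Qed.


Definition Gs : set (set Omega) := [set F | exists B : 'I_n -> set X,
  (forall i, measurable (B i)) /\ F = \bigcap_(i in [set: 'I_n]) S i @^-1` (B i `*` setT)].
Definition Lab (E : 'I_n -> set R) :=
  \bigcap_(i in [set: 'I_n]) S i @^-1` (setT `*` E i).
Definition pL (E : 'I_n -> set R) := \prod_(i < n) dyv (E i).

Lemma mpre i (A : set (X * R)) : measurable A -> measurable (S i @^-1` A).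
Proof. by move=> mA; rewrite -(setTI (S i @^-1` _)); exact: mS. Qed.

Lemma Gs_meas F : Gs F -> measurable F.
Proof.
move=> [B [mB ->]]; apply: fin_bigcap_measurable; first exact: finite_finset.
by move=> i _; apply: mpre; apply: measurableX.
Qed.

Lemma Lab_meas E : (forall i, measurable (E i)) -> measurable (Lab E).
Proof.
move=> mE; apply: fin_bigcap_measurable; first exact: finite_finset.
by move=> i _; apply: mpre; apply: measurableX.
Qed.

Lemma G_prop E : (forall i, measurable (E i)) -> forall F, Gs F ->
  P (F `&` Lab E) = (P F * (pL E)%:E)%E.
Proof.
move=> mE F [B [mB ->]].
have -> : (\bigcap_(i in [set: 'I_n]) S i @^-1` (B i `*` setT)) `&` Lab E =
    \bigcap_(i in [set: 'I_n]) S i @^-1` (B i `*` E i).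
  apply/seteqP; split => w /=.
    by move=> [h1 h2] i _; split; [exact: (h1 i I).1|exact: (h2 i I).2].
  by move=> h; split => i _; have [h1 h2] := h i I; split.
have rT : P (\bigcap_(i in [set: 'I_n]) S i @^-1` (B i `*` setT)) = _ :=
  @rectE B (fun=> setT) mB (fun=> measurableT).
rewrite rT rectE // -EFinM /pL -big_split /=.
by congr (_%:E); apply: eq_bigr => i _; rewrite dyvT mulr1.
Qed.

Lemma HTlem E : (forall i, measurable (E i)) -> P (Lab E) = (pL E)%:E.
Proof.
move=> mE.
have := @G_prop E mE setT; rewrite setTI probability_setT mul1e; apply.
exists (fun=> setT); split => //.
by apply/seteqP; split => w //= _ i _.
Qed.

Lemma compl_step E : (forall i, measurable (E i)) -> forall A : set Omega,
  measurable A /\ P (A `&` Lab E) = (P A * (pL E)%:E)%E ->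
  measurable (~` A) /\ P (~` A `&` Lab E) = (P (~` A) * (pL E)%:E)%E.
Proof.
move=> mE A [mA HA]; split; first exact: measurableC.
have HT := HTlem mE.
have eq1 : P (Lab E `\` A) = (P (Lab E) - P (Lab E `&` A))%E.
  apply: measureD => //; first exact: Lab_meas.
  by apply: (le_lt_trans (probability_le1 _ (Lab_meas mE))); rewrite ltry.
rewrite setIC -setDE eq1.
rewrite setIC HA HT probability_setC // (finP mA) -EFinM -EFinB -EFinM.
by congr (_%:E); rewrite mulrBl mul1r.
Qed.

Lemma union_step E : (forall i, measurable (E i)) -> forall F : (set Omega)^nat,
  trivIset setT F ->
  (forall k, measurable (F k) /\ P (F k `&` Lab E) = (P (F k) * (pL E)%:E)%E) ->
  measurable (\bigcup_k F k) /\
  P ((\bigcup_k F k) `&` Lab E) = (P (\bigcup_k F k) * (pL E)%:E)%E.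
Proof.
move=> mE F tF HF; split.
  by apply: bigcup_measurable => k _; exact: (HF k).1.
have eq2 : P (\bigcup_k (F k `&` Lab E)) =
    (\sum_(0 <= i <oo | i \in setT) P (F i `&` Lab E))%E.
  apply: measure_bigcup.
  + by move=> k _; apply: measurableI; [exact: (HF k).1|exact: Lab_meas].
  + apply/trivIsetP => i j _ _ ij.
    move/trivIsetP : tF => /(_ i j I I ij).
    by rewrite setIACA setIid => ->; rewrite set0I.
have eq3 : P (\bigcup_k F k) = (\sum_(0 <= i <oo | i \in setT) P (F i))%E.
  by apply: measure_bigcup => // k _; exact: (HF k).1.
rewrite setI_bigcupl eq2 eq3.
transitivity (\sum_(0 <= i <oo | i \in setT) ((pL E)%:E * P (F i)))%E.
  by apply: eq_eseriesr => i _; rewrite (HF i).2 muleC.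
rewrite nneseriesZl; first by rewrite muleC.
by move=> i _; exact: measure_ge0.
Qed.

Lemma indep_gen E : (forall i, measurable (E i)) -> forall F, <<s Gs >> F ->
  measurable F /\ P (F `&` Lab E) = (P F * (pL E)%:E)%E.
Proof.
move=> mE.
apply: (@dynkin_induction _ (g_sigma_algebraType Gs) Gs
  (fun F : set Omega => measurable F /\ P (F `&` Lab E) = (P F * (pL E)%:E)%E)).
- by [].
- move=> A B [BA [mBA ->]] [BB [mBB ->]]; exists (fun i => BA i `&` BB i).
  split; first by move=> i; exact: measurableI.
  apply/seteqP; split => w /=.
    by move=> [h1 h2] i _; split => //; split; [exact: (h1 i I).1|exact: (h2 i I).1].
  by move=> h; split => i _; split => //; have [[]] := h i I.
- split; first exact: measurableT.
  by rewrite setTI probability_setT mul1e HTlem.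
- by move=> F GF; split; [exact: Gs_meas|exact: G_prop].
- by move=> A _; apply: compl_step.
- by move=> F _ tF HF; apply: union_step.
Qed.

End Indep.
Section SumDisj.
Variables (R : realType) (dO : measure_display) (Omega : measurableType dO)
  (P : probability Omega R).

Lemma sum_disj (I : finType) (Q : pred I) (A : I -> set Omega) :
  (forall i, measurable (A i)) ->
  (forall i j, Q i -> Q j -> i != j -> A i `&` A j = set0) ->
  (\sum_(i | Q i) P (A i))%E = P (\bigcup_(i in [set i | Q i]) A i).
Proof.
move=> mA dA.
have -> : P (\bigcup_(i in [set i | Q i]) A i) = (\sum_(i \in [set i | Q i]) P (A i))%E.
  apply: measure_fin_bigcup; first exact: finite_finset.
    by apply/trivIsetP => i j Qi Qj ij; apply: dA.
  by move=> i _; apply: mA.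
rewrite -(@bigfs _ _ _ _ (enum I)) ?enum_uniq //; last by move=> i _; rewrite mem_enum.
by rewrite big_enum_cond.
Qed.
End SumDisj.

Local Open Scope ring_scope.

Lemma sum_if (R : realType) (n : nat) (N T : {set 'I_n}) (a b : R) :
  T \subset N ->
  \sum_(i in N) (if i \in T then a else b) = a *+ #|T| + b *+ (#|N| - #|T|).
Proof.
move=> TN; rewrite (bigID (fun i => i \in T)) /=.
rewrite (eq_bigr (fun=> a)); last by move=> i /andP[_ ->].
rewrite [X in _ + X](eq_bigr (fun=> b)); last by move=> i /andP[_ iT]; rewrite (negbTE iT).
rewrite !sumr_const; congr (_ *+ _ + _ *+ _).
  apply: eq_card => i; rewrite unfold_in /=.
  by apply/andP/idP => [[]//|iT]; split => //; apply: (fintype.subsetP TN).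
rewrite -(cardsID T N) (finset.setIidPr TN) addKn.
by apply: eq_card => i; rewrite unfold_in /= !inE andbC.
Qed.

Section Main.
Variables (R : realType) (dX : measure_display) (X : measurableType dX)
  (Dx : probability X R) (alpha : R) (k n : nat)
  (dist : X -> X -> R)
  (dO : measure_display) (Omega : measurableType dO) (P : probability Omega R)
  (S : 'I_n -> Omega -> X * R) (x : X).
Hypotheses (a0 : 0 <= alpha) (a1 : alpha <= 1) (ok : odd k) (kn : (k <= n)%N)
  (mdist : forall y, measurable_fun setT (dist y))
  (mS : forall i, measurable_fun setT (S i))
  (law : forall i A, measurable A -> P (S i @^-1` A) = (Dx \x label_dist alpha)%E A)
  (ind : mutually_independent P S).

Definition EN (N : {set 'I_n}) := [set w | nb k (fun j => dist x (S j w).1) = N].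
Definition Eset (N T : {set 'I_n}) (i : 'I_n) : set R :=
  if i \in N then (if i \in T then [set -1] else [set 1]) else setT.
Definition AA (p : {set 'I_n} * {set 'I_n}) := EN p.1 `&` Lab S (Eset p.1 p.2).

Lemma mdd j : measurable_fun setT (fun w => dist x (S j w).1).
Proof.
apply: (measurableT_comp (mdist x)).
exact: (measurableT_comp measurable_fst (mS j)).
Qed.

Lemma EN_meas N : measurable (EN N).
Proof. exact: (measurable_nb k mdd N). Qed.

Lemma mdd_g j : measurable_fun (setT : set (g_sigma_algebraType (Gs S)))
  (fun w => dist x (S j w).1).
Proof.
move=> _ Y mY; rewrite setTI.
apply: sub_gen_smallest; exists (fun i => if i == j then dist x @^-1` Y else setT).
split.
  move=> i; case: eqP => _ //; rewrite -(setTI (dist x @^-1` Y)); exact: mdist.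
apply/seteqP; split => w /=.
  move=> h i _; case: eqP => [->|_] //=.
move=> h; have := h j I; rewrite eqxx /=; by case.
Qed.

Lemma EN_gen N : <<s Gs S >> (EN N).
Proof. exact: (@measurable_nb R _ (g_sigma_algebraType (Gs S)) n k _ mdd_g N). Qed.

Lemma Eset_meas N T i : measurable (Eset N T i).
Proof. by rewrite /Eset; case: ifP => _ //; case: ifP. Qed.


Lemma dyv_m1 : dyv alpha [set -1] = alpha.
Proof.
rewrite /dyv (_ : (-1 \in [set -1]) = true); last by apply/mem_set.
rewrite (_ : (1 \in [set (-1 : R)]) = false); first by rewrite mulr1 mulr0 addr0.
by apply/negbTE/negP => /set_mem /= h; lra.
Qed.

Lemma dyv_1 : dyv alpha [set 1] = 1 - alpha.
Proof.
rewrite /dyv (_ : (1 \in [set 1]) = true); last by apply/mem_set.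
rewrite (_ : ((-1 : R) \in [set 1]) = false); first by rewrite mulr1 mulr0 add0r.
by apply/negbTE/negP => /set_mem /= h; lra.
Qed.

Lemma AA_prob (N T : {set 'I_n}) : T \subset N ->
  P (AA (N, T)) = (fine (P (EN N)) * (alpha ^+ #|T| * (1 - alpha) ^+ (#|N| - #|T|)))%:E.
Proof.
move=> TN; rewrite /AA /= (indep_gen a0 a1 mS law ind (@Eset_meas N T) (EN_gen N)).2.
rewrite (finP P (EN_meas N)) -EFinM; congr ((_ * _)%:E).
rewrite /pL -(prod_if _ _ TN); apply: eq_bigr => i _; rewrite /Eset.
case: ifP => _; last exact: dyvT.
by case: ifP => _; [exact: dyv_m1|exact: dyv_1].
Qed.


Lemma EN0 (N : {set 'I_n}) : #|N| != k -> EN N = set0.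
Proof.
move=> cN; apply/seteqP; split => w //= h.
by move: cN; rewrite -h card_nb // eqxx.
Qed.

Lemma EN_disj (N N' : {set 'I_n}) : N != N' -> EN N `&` EN N' = set0.
Proof.
move=> NN; apply/seteqP; split => w //= [h1 h2].
by move: NN; rewrite -h1 -h2 eqxx.
Qed.

Lemma sumEN : \sum_(N : {set 'I_n}) fine (P (EN N)) = 1.
Proof.
apply: EFin_inj; rewrite -sumEFin.
rewrite (eq_bigr (fun N => P (EN N))); last by move=> N _; apply/esym/finP/EN_meas.
rewrite (sum_disj P (Q := xpredT)); last 2 first.
- exact: EN_meas.
- by move=> N N' _ _; exact: EN_disj.
rewrite (_ : \bigcup_(i in _) _ = setT) ?probability_setT //.
apply/seteqP; split => w // _.
by exists (nb k (fun j => dist x (S j w).1)).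
Qed.

Lemma Sm m : (m <= k)%N ->
  (\sum_(p : {set 'I_n} * {set 'I_n} | (p.2 \subset p.1) && (#|p.2| <= m)%N) P (AA p))%E =
  (\sum_(j < m.+1) ('C(k, j))%:R * alpha ^+ j * (1 - alpha) ^+ (k - j))%:E.
Proof.
move=> mk.
transitivity (\sum_(N : {set 'I_n}) \sum_(T : {set 'I_n} | (T \subset N) && (#|T| <= m)%N)
    ((fine (P (EN N)) * (alpha ^+ #|T| * (1 - alpha) ^+ (#|N| - #|T|)))%:E))%E.
  rewrite pair_big_dep; apply: eq_big => [[N T]|[N T] /andP[/= TN _]] //=.
  by rewrite AA_prob.
transitivity (\sum_(N : {set 'I_n}) (fine (P (EN N)) *
   \sum_(j < m.+1) ('C(k, j))%:R * alpha ^+ j * (1 - alpha) ^+ (k - j))%:E)%E.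
  apply: eq_bigr => N _; rewrite sumEFin -mulr_sumr.
  have [cN|cN] := eqVneq #|N| k.
    by rewrite cN (wsum _ _ cN mk).
  by rewrite EN0 // measure0 /= !mul0r.
by rewrite sumEFin -mulr_suml sumEN mul1r.
Qed.


Definition Good := [set w | 0 < \sum_(i in nb k (fun j => dist x (S j w).1)) (S i w).2].

Lemma mset_lt (g : Omega -> R) : measurable_fun setT g -> measurable [set w | 0 < g w].
Proof.
move=> mg; have h := measurable_fun_ltr (measurable_cst (0:R)) mg.
have := h measurableT [set true] I.
by rewrite setTI.
Qed.

Lemma Good_meas : measurable Good.
Proof.
have -> : Good = \bigcup_(N in [set: {set 'I_n}])
    (EN N `&` [set w | 0 < \sum_(i in N) (S i w).2]).
  apply/seteqP; split => w /=.
    by move=> h; exists (nb k (fun j => dist x (S j w).1)).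
  by move=> [N _ [/= <-]].
apply: fin_bigcup_measurable; first exact: finite_finset.
move=> N _; apply: measurableI; first exact: EN_meas.
apply: mset_lt.
rewrite (_ : (fun w => \sum_(i in N) (S i w).2) = (fun w => \sum_(i < n) (if i \in N then (S i w).2 else 0))).
  apply: (@measurable_sum _ _ _ _ _ _ (fun i w => if i \in N then (S i w).2 else 0)) => i /=; case: (i \in N); last exact: measurable_cst.
  exact: (measurableT_comp measurable_snd (mS i)).
by apply/funext => w; rewrite big_mkcond.
Qed.

Lemma AA_sum (N T : {set 'I_n}) w : T \subset N -> AA (N, T) w ->
  \sum_(i in nb k (fun j => dist x (S j w).1)) (S i w).2 = (k - #|T|)%:R - #|T|%:R.
Proof.
move=> TN [/= hN hL]; rewrite hN.
have cN : #|N| = k by rewrite -hN card_nb.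
rewrite (eq_bigr (fun i => if i \in T then -1 else 1)); last first.
  move=> i iN; have := hL i I; rewrite /Eset iN /=.
  by case: (i \in T) => -[].
by rewrite sum_if // cN addrC mulNrn.
Qed.

Lemma AA_good (N T : {set 'I_n}) : T \subset N -> (#|T| <= k./2)%N -> AA (N, T) `<=` Good.
Proof.
move=> TN tk w hw; rewrite /Good /= (AA_sum TN hw) subr_gt0 ltr_nat.
have := odd_double_half k; rewrite ok -muln2 => hk.
lia.
Qed.

Lemma AA_bad (N T : {set 'I_n}) : T \subset N -> (k./2 < #|T|)%N -> AA (N, T) `<=` ~` Good.
Proof.
move=> TN tk w hw; rewrite /Good /= (AA_sum TN hw) subr_gt0 ltr_nat.
have := odd_double_half k; rewrite ok -muln2 => hk.
lia.
Qed.

Lemma AA_meas p : measurable (AA p).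
Proof.
apply: measurableI; first exact: EN_meas.
by apply: (Lab_meas mS); exact: Eset_meas.
Qed.

Lemma AA_disj (p q : {set 'I_n} * {set 'I_n}) : p.2 \subset p.1 -> q.2 \subset q.1 ->
  p != q -> AA p `&` AA q = set0.
Proof.
case: p => N T; case: q => N' T' /= TN TN' pq.
apply/seteqP; split => w //= [[/= h1 hL1] [/= h2 hL2]].
rewrite /EN /= in h1 h2.
subst N N'.
suff eT : T = T' by move: pq; rewrite eT eqxx.
apply/setP => i.
have [iN|iN] := boolP (i \in nb k (fun j => dist x (S j w).1)); last first.
  rewrite (_ : i \in T = false); last by apply/negbTE; exact: (contraNN (@fintype.subsetP _ _ _ TN i) iN).
  by rewrite (_ : i \in T' = false) //; apply/negbTE; exact: (contraNN (@fintype.subsetP _ _ _ TN' i) iN).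
have := hL1 i I; have := hL2 i I; rewrite /Eset iN /= => -[_ +] [_].
case: (i \in T); case: (i \in T') => //= -> h; lra.
Qed.

Lemma half_le : (k./2 <= k)%N.
Proof. have := odd_double_half k; rewrite ok -muln2; lia. Qed.

Lemma sum_r (Q : pred ({set 'I_n} * {set 'I_n})) :
  (\sum_(p | Q p) P (AA p))%E = (\sum_(p | Q p) fine (P (AA p)))%:E.
Proof.
rewrite -sumEFin; apply: eq_bigr => p _; exact: (finP P (AA_meas p)).
Qed.

Lemma sum_le (Q : pred ({set 'I_n} * {set 'I_n})) (B : set Omega) :
  measurable B ->
  (forall p, Q p -> p.2 \subset p.1) ->
  (forall p, Q p -> AA p `<=` B) ->
  (\sum_(p | Q p) P (AA p) <= P B)%E.
Proof.
move=> mB QS QB; rewrite (sum_disj P (Q := Q)); last 2 first.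
- exact: AA_meas.
- by move=> p q Qp Qq; apply: AA_disj; apply: QS.
apply: le_measure; rewrite ?inE //.
- by apply: fin_bigcup_measurable; [exact: finite_finset|move=> p _; exact: AA_meas].
- by move=> w [p /= Qp]; apply: QB.
Qed.

Lemma PGood : P Good = (phi k alpha)%:E.
Proof.
pose r p := fine (P (AA p)).
pose Qm m := fun p : {set 'I_n} * {set 'I_n} => (p.2 \subset p.1) && (#|p.2| <= m)%N.
have Sr m : (m <= k)%N -> \sum_(p | Qm m p) r p =
    \sum_(j < m.+1) ('C(k, j))%:R * alpha ^+ j * (1 - alpha) ^+ (k - j).
  by move=> mk; apply: EFin_inj; rewrite -sum_r Sm.
have Sgood : \sum_(p | Qm k./2 p) r p = phi k alpha by rewrite Sr // half_le.
have Sall : \sum_(p | Qm k p) r p = 1 by rewrite Sr // binsum1.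
pose Qb p := Qm k p && ~~ (#|p.2| <= k./2)%N.
have Sbad : \sum_(p | Qb p) r p = 1 - phi k alpha.
  have := Sall; rewrite (bigID (fun p : {set 'I_n} * {set 'I_n} => #|p.2| <= k./2)%N) /=.
  have -> : \sum_(p | Qm k p && (#|p.2| <= k./2)%N) r p = \sum_(p | Qm k./2 p) r p.
    apply: eq_bigl => p; rewrite /Qm -andbA; congr (_ && _).
    by apply/idP/idP => [/andP[] //|h]; rewrite h (leq_trans h half_le).
  by rewrite Sgood => <-; rewrite addrC addrK.
have h1 : ((phi k alpha)%:E <= P Good)%E.
  rewrite -Sgood -sum_r; apply: sum_le; first exact: Good_meas.
  + by move=> p /andP[].
  + by move=> [N T] /andP[/= TN Tk]; apply: AA_good.
have h2 : ((1 - phi k alpha)%:E <= P (~` Good))%E.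
  rewrite -Sbad -sum_r; apply: sum_le; first exact/measurableC/Good_meas.
  + by move=> p /andP[/andP[]].
  + by move=> [N T] /andP[/andP[/= TN _] Tk]; apply: AA_bad => //; rewrite ltnNge.
have e1 : P Good = (fine (P Good))%:E := finP P Good_meas.
have e2 : P (~` Good) = (1 - P Good)%E := probability_setC P Good_meas.
rewrite e2 e1 -EFinB lee_fin in h2.
rewrite e1 lee_fin in h1.
rewrite e1; congr (_%:E); lra.
Qed.

Lemma knnE (xs : 'I_n -> X) : knn_neighbors k dist x xs = nb k (fun j => dist x (xs j)).
Proof.
apply/setP => i; rewrite /knn_neighbors /nb !inE; congr (_ < _)%N.
apply: eq_card => j; rewrite !inE /prec.
by apply/idP/idP => [/set_mem|h] //; apply/mem_set.
Qed.

Lemma knn_ind w : knn k dist (fun i => S i w) x = \1_Good w - \1_(~` Good) w.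
Proof.
rewrite /knn !indicE.
case: ifPn => h.
  have hG : w \in Good by apply/mem_set; rewrite /Good /=; rewrite knnE in h; exact: h.
  by rewrite hG (_ : w \in ~` Good = false) ?subr0 //; apply/negbTE; rewrite in_setC hG.
have hG : w \in ~` Good by apply/mem_set => /= hg; move: h; rewrite knnE /= hg.
by rewrite hG (_ : w \in Good = false) ?sub0r //; apply/negbTE; rewrite -in_setC.
Qed.

Lemma main_result :
  (\int[P]_w (knn k dist (fun i => S i w) x)%:E)%E = (-1 + 2 * phi k alpha)%:E.
Proof.
rewrite (eq_integral (fun w => (\1_Good w)%:E - (\1_(~` Good) w)%:E)%E); last first.
  by move=> w _; rewrite knn_ind EFinB.
rewrite integralB_EFin //; last 2 first.
- exact: (integrable_indic P Good_meas).
- exact: (integrable_indic P (measurableC Good_meas)).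
rewrite !integral_indic //; [|apply: measurableC; exact: Good_meas|exact: Good_meas].
transitivity (P Good - P (~` Good))%E; first by rewrite !setIT.
have e2 : P (~` Good) = (1 - P Good)%E := probability_setC P Good_meas.
rewrite e2 PGood.
transitivity ((phi k alpha - (1 - phi k alpha))%:E); first by rewrite !EFinB.
congr (_%:E); lra.
Qed.

End Main.

Unset Implicit Arguments.

Theorem proposition19
  (R : realType) (dX : measure_display) (X : measurableType dX)
  (Dx : probability X R) (alpha : R) (k n : nat)
  (dist : X -> X -> R)
  (dO : measure_display) (Omega : measurableType dO) (P : probability Omega R)
  (S : 'I_n -> Omega -> X * R) (x : X) :
  0 < alpha -> alpha <= 1 -> odd k -> (k <= n)%N ->
  is_metric dist ->
  (forall y, measurable_fun setT (dist y)) ->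
  (* S = (S_1, ..., S_n) ~ D^n with D = Dx (x) D_y^alpha: i.i.d. samples *)
  (forall i, measurable_fun setT (S i)) ->
  (forall i A, measurable A -> P (S i @^-1` A) = (Dx \x label_dist alpha)%E A) ->
  mutually_independent P S ->
  (\int[P]_w (knn k dist (fun i => S i w) x)%:E)%E = (-1 + 2 * phi k alpha)%:E.
Proof.
move=> a0 a1 ok kn _ mdist mS law ind.
apply: (main_result (Dx := Dx)) => //.
by rewrite le_eqVlt a0 orbT.
Qed.
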